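(* Let $p\in[0,1)$, let $f:2^{\mathcal{N}}\to\mathbb{R}_{\ge0}$ be a non-negative submodular function with multilinear extension $F$, and let $\mathcal{P}\subseteq[0,1]^{\mathcal{N}}$ be a downward-closed solvable polytope such that $z_i\le p$ for all $\bm{z}\in\mathcal{P}$ and $i\in\mathcal{N}$. Let $\bm{x}(\cdot)$ be the trajectory of the Measured Continuous Greedy algorithm on $F$ and $\mathcal{P}$. Then for every $b\in[0,1]$, $\bm{x}(b)\in b\cdot\mathcal{P}$ and \[F(\bm{x}(b))\ge\begin{cases} b\,e^{-b}\,\max_{\bm{z}\in\mathcal{P}} f^+(\bm{z}), & 0\le b\le \ln\frac{1}{1-p},\\[2pt] \big(1-p-e^{-b}(1+\ln(1-p))\big)\max_{\bm{z}\in\mathcal{P}} f^+(\bm{z}), & \ln\frac{1}{1-p}\le b\le 1.\end{cases}\]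
   Context: Submodular: $f(A)+f(B)\ge f(A\cup B)+f(A\cap B)$; non-negative: $f\ge0$, $f(\emptyset)=0$. Multilinear extension $F(\bm{x})=\sum_{S} f(S)\prod_{i\in S}x_i\prod_{i\notin S}(1-x_i)$; concave closure $f^+(\bm{x})=\max\{\sum_S a_Sf(S): a_S\ge0,\sum_Sa_S=1,\sum_Sa_S\mathbf{1}_S=\bm{x}\}$. A polytope $\mathcal{P}\subseteq[0,1]^{\mathcal{N}}$ is downward-closed if $\bm{0}\le\bm{y}\le\bm{z}\in\mathcal{P}$ implies $\bm{y}\in\mathcal{P}$, and solvable if linear functions can be maximized over it in polynomial time. The Measured Continuous Greedy algorithm (continuous-time version) produces $\bm{x}:[0,1]\to[0,1]^{\mathcal{N}}$ with $\bm{x}(0)=\bm{0}$ and $\frac{d}{dt}\bm{x}(t)=\bm{v}(t)\circ(\bm{1}-\bm{x}(t))$, where $\circ$ is the coordinatewise product and $\bm{v}(t)\in\arg\max_{\bm{v}\in\mathcal{P}}\langle \bm{v}\circ(\bm{1}-\bm{x}(t)),\nabla F(\bm{x}(t))\rangle$; its output at time $b$ is $\bm{x}(b)$. $b\cdot\mathcal{P}=\{b\bm{z}:\bm{z}\in\mathcal{P}\}$. *)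

(* Defs.v *)
From HB Require Import structures.
From mathcomp Require Import all_boot all_order all_algebra.
From mathcomp Require Import all_classical all_reals all_analysis.
Set Implicit Arguments. Unset Strict Implicit. Unset Printing Implicit Defensive.
Import Order.TTheory GRing.Theory Num.Theory.
Import numFieldNormedType.Exports.
Local Open Scope classical_set_scope.
Local Open Scope ring_scope.

Section Defs.
Variables (R : realType) (T : finType).

Definition nonneg_setfun (f : {set T} -> R) : Prop :=
  (forall S, 0 <= f S) /\ f finset.set0 = 0.

Definition submodular (f : {set T} -> R) : Prop :=
  forall A B : {set T}, f A + f B >= f (A :|: B) + f (A :&: B).

Definition multilinear_ext (f : {set T} -> R) (x : T -> R) : R :=
  \sum_(S : {set T}) f S * (\prod_(i in S) x i) * (\prod_(i in ~: S) (1 - x i)).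

(* concave closure f^+(x): the maximum over distributions on sets with
   marginals x of the expected value of f (written as a supremum; the
   feasible set is compact, so this is the max when it is nonempty) *)
Definition concave_closure (f : {set T} -> R) (x : T -> R) : R :=
  sup [set y : R | exists a : {set T} -> R,
         [/\ forall S, 0 <= a S,
             \sum_(S : {set T}) a S = 1,
             (forall i, \sum_(S : {set T}) a S * (i \in S)%:R = x i) &
             y = \sum_(S : {set T}) a S * f S]].

Definition upd (x : T -> R) (i : T) (s : R) : T -> R :=
  fun j => if j == i then s else x j.

Definition gradF (f : {set T} -> R) (x : T -> R) (i : T) : R :=
  derive1 (fun s => multilinear_ext f (upd x i s)) (x i).

Definition polytope (P : set (T -> R)) : Prop :=
  exists (cs : seq ((T -> R) * R)),
    P = [set z | forall c, c \in cs -> \sum_i c.1 i * z i <= c.2].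

Definition in_unit_cube (P : set (T -> R)) : Prop :=
  forall z, P z -> forall i, 0 <= z i <= 1.

Definition downward_closed (P : set (T -> R)) : Prop :=
  forall y z : T -> R, (forall i, 0 <= y i <= z i) -> P z -> P y.

Definition scale_set (b : R) (P : set (T -> R)) : set (T -> R) :=
  [set w | exists2 z, P z & w = (fun i => b * z i)].

Definition mcg_objective (f : {set T} -> R) (x v : T -> R) : R :=
  \sum_i v i * (1 - x i) * gradF f x i.

Definition MCG_trajectory (f : {set T} -> R) (P : set (T -> R))
    (x v : R -> T -> R) : Prop :=
  [/\ x 0 = (fun _ => 0),
      (forall i, {within `[0, 1], continuous (fun s => x s i)}),
      (forall t : R, 0 < t < 1 -> P (v t) /\
          forall w, P w -> mcg_objective f (x t) w <= mcg_objective f (x t) (v t)) &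
      (forall t : R, 0 < t < 1 -> forall i,
          is_derive t (1:R) (fun s : R => x s i) (v t i * (1 - x t i)))].

End Defs.

(* Main.v *)
Set Warnings "-notation-overridden,-ambiguous-paths,-notation-incompatible-prefix,-deprecated".
Require Import Defs.
From HB Require Import structures.
From mathcomp Require Import all_boot all_order all_algebra.
From mathcomp Require Import all_classical all_reals all_analysis.
From mathcomp Require Import ring lra.
Import Order.TTheory GRing.Theory Num.Theory.
Import numFieldNormedType.Exports.
Local Open Scope classical_set_scope.
Local Open Scope ring_scope.
Set Implicit Arguments. Unset Strict Implicit. Unset Printing Implicit Defensive.
Section Comb.
Variables (R : realType) (T : finType).
Implicit Types (y : T -> R) (h : {set T} -> R).

Definition gk y (S : {set T}) k : R := if k \in S then y k else 1 - y k.
Definition wS y S : R := \prod_k gk y S k.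
Definition EE y h : R := \sum_S wS y S * h S.

Lemma mleE f y : multilinear_ext f y = EE y f.
Proof.
rewrite /multilinear_ext /EE; apply: eq_bigr => S _.
rewrite [RHS]mulrC -mulrA; congr (f S * _).
rewrite /wS [RHS](bigID (fun k => k \in S)) /=; congr (_ * _).
  by apply: eq_bigr => k kS; rewrite /gk kS.
apply: eq_big => [k|k]; first by rewrite finset.in_setC.
by rewrite finset.in_setC /gk => /negbTE ->.
Qed.

Lemma wS_ge0 y S : (forall k, 0 <= y k <= 1) -> 0 <= wS y S.
Proof.
move=> H; apply: prodr_ge0 => k _; rewrite /gk; case: ifP => _;
  have := H k; lra.
Qed.

Lemma wS_sum1 y : \sum_S wS y S = 1.
Proof.
have := @bigA_distr R 0 1 *%R +%R T y (fun k => 1 - y k).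
rewrite /wS /gk => <-; apply: big1 => k _ /=; exact: subrKC.
Qed.

Lemma EE_cst y c : EE y (fun _ => c) = c.
Proof. by rewrite /EE -mulr_suml wS_sum1 mul1r. Qed.

Lemma EE_le y h1 h2 : (forall k, 0 <= y k <= 1) -> (forall S, h1 S <= h2 S) ->
  EE y h1 <= EE y h2.
Proof.
move=> Hy H; apply: ler_sum => S _; apply: ler_wpM2l; [exact: wS_ge0|exact: H].
Qed.

Lemma EE_ge0 y h : (forall k, 0 <= y k <= 1) -> (forall S, 0 <= h S) -> 0 <= EE y h.
Proof.
move=> Hy H; apply: sumr_ge0 => S _; apply: mulr_ge0; [exact: wS_ge0|exact: H].
Qed.

Lemma EE_add y h1 h2 : EE y (fun S => h1 S + h2 S) = EE y h1 + EE y h2.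
Proof. by rewrite /EE -big_split /=; apply: eq_bigr => S _; rewrite mulrDr. Qed.

Lemma EE_scale y c h : EE y (fun S => c * h S) = c * EE y h.
Proof. by rewrite /EE mulr_sumr; apply: eq_bigr => S _; rewrite mulrCA. Qed.

Lemma EE_opp y h : EE y (fun S => - h S) = - EE y h.
Proof. by rewrite /EE -sumrN; apply: eq_bigr => S _; rewrite mulrN. Qed.

Lemma EE_sum y (I : finType) (H : I -> {set T} -> R) :
  EE y (fun S => \sum_i H i S) = \sum_i EE y (H i).
Proof.
rewrite /EE; under eq_bigr do rewrite mulr_sumr.
by rewrite exchange_big.
Qed.

End Comb.
Section Der.
Variables (R : realType).

Lemma is_derive_sumseq (I : eqType) (r : seq I) (h : I -> R -> R) (dh : I -> R) (t : R) :
  (forall i, is_derive t 1 (h i) (dh i)) ->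
  is_derive t 1 (fun u => \sum_(i <- r) h i u) (\sum_(i <- r) dh i).
Proof.
move=> H; elim: r => [|a r IH].
  have -> : (fun u => \sum_(i <- [::]) h i u) = cst 0 by apply/funext => u; rewrite big_nil.
  rewrite big_nil; exact: is_derive_cst.
have -> : (fun u => \sum_(i <- a :: r) h i u) = h a + (fun u => \sum_(i <- r) h i u).
  by apply/funext => u; rewrite big_cons.
rewrite big_cons; exact: is_deriveD.
Qed.

Lemma is_derive_prodseq (I : eqType) (r : seq I) (g : I -> R -> R) (dg : I -> R) (t : R) :
  uniq r -> (forall k, is_derive t 1 (g k) (dg k)) ->
  is_derive t 1 (fun u => \prod_(k <- r) g k u)
     (\sum_(k <- r) dg k * \prod_(l <- r | l != k) g l t).
Proof.
move=> + H; elim: r => [|a r IH].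
  have -> : (fun u => \prod_(i <- [::]) g i u) = cst 1 by apply/funext => u; rewrite big_nil.
  rewrite big_nil => _; exact: is_derive_cst.
move=> /= /andP[ar ur].
have -> : (fun u => \prod_(i <- a :: r) g i u) = g a * (fun u => \prod_(i <- r) g i u).
  by apply/funext => u; rewrite big_cons.
apply: is_derive_eq; first exact: (is_deriveM (H a) (IH ur)).
rewrite big_cons /= big_cons eqxx /=.
have -> : \prod_(l <- r | l != a) g l t = \prod_(l <- r) g l t.
  rewrite big_seq_cond [RHS]big_seq; apply: eq_bigl => l.
  by case: (boolP (l \in r)) => //= lr; apply/negP => /eqP E; move: ar; rewrite -E lr.
have -> : \sum_(k <- r) dg k * \prod_(l <- a :: r | l != k) g l t =
          g a t * \sum_(k <- r) dg k * \prod_(l <- r | l != k) g l t.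
  rewrite mulr_sumr big_seq [RHS]big_seq; apply: eq_bigr => k kr.
  rewrite big_cons; have -> : (a != k) by apply/negP => /eqP E; move: ar; rewrite E kr.
  by rewrite mulrCA.
rewrite addrC; congr (_ + _); exact: mulrC.
Qed.

End Der.
Section Coord.
Variables (R : realType) (T : finType).
Implicit Types (y : T -> R) (h : {set T} -> R) (A B S : {set T}).

Definition PP y i S : R := \prod_(k | k != i) gk y S k.

Lemma wS_split y i S : wS y S = gk y S i * PP y i S.
Proof. by rewrite /wS (bigD1 i). Qed.

Lemma PP_upd y i s S : PP (upd y i s) i S = PP y i S.
Proof. by apply: eq_bigr => k /negbTE ki; rewrite /gk /upd ki. Qed.

Lemma PP_U1 y i A : PP y i (i |: A) = PP y i A.
Proof. by apply: eq_bigr => k /negbTE ki; rewrite /gk !inE ki. Qed.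

Lemma gk_upd_i y i s S : gk (upd y i s) S i = if i \in S then s else 1 - s.
Proof. by rewrite /gk /upd eqxx. Qed.

Lemma setU1_in (i : T) A : i \in A -> i |: A = A.
Proof. by move=> iA; apply/finset.setUidPr; rewrite finset.sub1set. Qed.

Lemma setD1_notin (i : T) A : i \notin A -> A :\ i = A.
Proof. by move=> iA; apply/finset.setDidPl; rewrite disjoint_sym finset.disjoints1. Qed.

Lemma sum_toggle (i : T) (F : {set T} -> R) :
  \sum_(A : {set T} | i \notin A) F (i |: A) = \sum_(B : {set T} | i \in B) F B.
Proof.
rewrite [RHS](reindex_onto (fun A => i |: A) (fun B => B :\ i)) /=; last first.
  by move=> B iB; rewrite finset.setD1K.
apply: eq_bigl => A; rewrite finset.setU11 /=.
case: (boolP (i \in A)) => iA /=.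
  by case: eqP => // E; move: iA; rewrite -E finset.setD11.
by rewrite finset.setU1K ?eqxx.
Qed.

Lemma EE_upd1 y i h : EE (upd y i 1) h = EE y (fun A => h (i |: A)).
Proof.
rewrite /EE.
transitivity (\sum_(B : {set T} | i \in B) (PP y i B * h B)).
  rewrite [LHS](bigID (fun B => i \in B)) /= [X in _ + X]big1 ?addr0.
    by apply: eq_bigr => B iB; rewrite (wS_split _ i) gk_upd_i iB PP_upd mul1r.
  by move=> B /negbTE iB; rewrite (wS_split _ i) gk_upd_i iB PP_upd subrr !mul0r.
have E1 : \sum_(B : {set T} | i \in B) wS y B * h (i |: B) = \sum_(B : {set T} | i \in B) y i * (PP y i B * h B).
  by apply: eq_bigr => B iB; rewrite (wS_split _ i) /gk iB setU1_in // mulrA.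
have E2 : \sum_(B : {set T} | i \notin B) wS y B * h (i |: B) =
          \sum_(B : {set T} | i \in B) (1 - y i) * (PP y i B * h B).
  rewrite -sum_toggle; apply: eq_bigr => A iA.
  by rewrite (wS_split _ i) /gk (negbTE iA) PP_U1 mulrA.
rewrite [RHS](bigID (fun B => i \in B)) /= E1 E2 -big_split /=.
by apply: eq_bigr => B _; rewrite -mulrDl subrKC mul1r.
Qed.

Lemma EE_upd0 y i h : EE (upd y i 0) h = EE y (fun A => h (A :\ i)).
Proof.
rewrite /EE.
transitivity (\sum_(B : {set T} | i \notin B) (PP y i B * h B)).
  rewrite [LHS](bigID (fun B => i \in B)) /= big1 ?add0r.
    by apply: eq_bigr => B /negbTE iB; rewrite (wS_split _ i) gk_upd_i iB PP_upd subr0 mul1r.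
  by move=> B iB; rewrite (wS_split _ i) gk_upd_i iB PP_upd !mul0r.
have E1 : \sum_(B : {set T} | i \notin B) wS y B * h (B :\ i) =
          \sum_(B : {set T} | i \notin B) (1 - y i) * (PP y i B * h B).
  by apply: eq_bigr => B iB; rewrite (wS_split _ i) /gk (negbTE iB) setD1_notin // mulrA.
have E2 : \sum_(B : {set T} | i \in B) wS y B * h (B :\ i) =
          \sum_(B : {set T} | i \notin B) y i * (PP y i B * h B).
  rewrite -sum_toggle; apply: eq_bigr => A iA.
  by rewrite (wS_split _ i) /gk finset.setU11 PP_U1 finset.setU1K // mulrA.
rewrite [RHS](bigID (fun B => i \in B)) /= E1 E2 -big_split /=.
by apply: eq_bigr => B _; rewrite -mulrDl subrKC mul1r.
Qed.

Definition Dg (f : {set T} -> R) y i := EE (upd y i 1) f - EE (upd y i 0) f.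

Lemma DgE f y i : Dg f y i = \sum_(S : {set T}) (if i \in S then 1 else -1) * PP y i S * f S.
Proof.
rewrite /Dg /EE -sumrB; apply: eq_bigr => S _.
by rewrite !(wS_split _ i) !gk_upd_i !PP_upd; case: (i \in S); ring.
Qed.

Lemma EE_lin y i h : EE y h = y i * EE (upd y i 1) h + (1 - y i) * EE (upd y i 0) h.
Proof.
rewrite /EE !mulr_sumr -big_split; apply: eq_bigr => S _.
by rewrite /= !(wS_split _ i) !gk_upd_i !PP_upd /gk; case: (i \in S); ring.
Qed.

Lemma is_derive_onem (f : R -> R) (t df : R) : is_derive t 1 f df ->
  is_derive t 1 (fun u => 1 - f u) (- df).
Proof.
move=> H; have H2 := is_deriveB (is_derive_cst (1:R) t 1) H.
rewrite sub0r in H2; exact: H2.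
Qed.

Lemma is_derive_EE (z : R -> T -> R) (dz : T -> R) (t : R) h :
  (forall k, is_derive t 1 (fun u => z u k) (dz k)) ->
  is_derive t 1 (fun u => EE (z u) h) (\sum_k dz k * Dg h (z t) k).
Proof.
move=> Hz.
have HW : forall S, is_derive t 1 (fun u => wS (z u) S)
   (\sum_k (if k \in S then dz k else - dz k) * PP (z t) k S).
  move=> S; apply: (is_derive_prodseq (g := fun k u => gk (z u) S k)).
    exact: index_enum_uniq.
  move=> k; rewrite /gk; case: (k \in S); first exact: Hz.
  exact: is_derive_onem.
apply: is_derive_eq.
  apply: (@is_derive_sumseq R _ (index_enum _) (fun X u => wS (z u) X * h X)).
rewrite /=.
under [RHS]eq_bigr do rewrite DgE mulr_sumr.
rewrite exchange_big /=; apply: eq_bigr => S _.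
rewrite scaler0 add0r scaler_sumr; apply: eq_bigr => k _ /=.
rewrite /GRing.scale /=. by case: (k \in S); ring.
Qed.

End Coord.
Section Sub.
Variables (R : realType) (T : finType).
Implicit Types (y : T -> R) (h : {set T} -> R) (A B S : {set T}).

Lemma gradF_Dg f y i : gradF f y i = Dg f y i.
Proof.
rewrite /gradF derive1E.
have H : is_derive (y i) 1 (fun s => multilinear_ext f (upd y i s)) (Dg f y i).
  have -> : (fun s => multilinear_ext f (upd y i s)) = (fun s => EE (upd y i s) f).
    by apply/funext => s; rewrite mleE.
  apply: is_derive_eq.
    apply: (@is_derive_EE R T (fun s => upd y i s) (fun k => if k == i then 1 else 0)).
    move=> k; rewrite /upd; case: (k == i); first exact: is_derive_id.
    exact: is_derive_cst.
  rewrite (bigD1 i) //= eqxx mul1r big1 ?addr0; last first.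
    by move=> k /negbTE ->; rewrite mul0r.
  congr Dg; apply/funext => k; rewrite /upd; by case: eqP => [->|].
exact: derive_val.
Qed.

Lemma sub_sum (f : {set T} -> R) A S : submodular f ->
  f (A :|: S) - f A <= \sum_(i in S) (f (i |: A) - f A).
Proof.
move=> Hs; move: {2}#|S| (erefl #|S|) => n; elim: n S => [|n IH] S cS.
  have -> : S = finset.set0 by apply/eqP; rewrite -cards_eq0 cS.
  by rewrite big_set0 finset.setU0 subrr.
have [i iS] : exists i, i \in S by apply/finset.set0Pn; rewrite -card_gt0 cS.
rewrite (big_setD1 i iS) /=.
have cS' : #|S :\ i| = n by move: cS; rewrite (cardsD1 i S) iS add1n => -[].
have := IH _ cS'.
have Hsub := Hs (i |: A) (A :|: (S :\ i)).
have E1 : (i |: A) :|: (A :|: S :\ i) = A :|: S.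
  apply/finset.setP => k; rewrite !inE; case: (eqVneq k i) => [->|ki] /=; rewrite ?iS ?orbT //.
  by case: (k \in A).
have E2 : (i |: A) :&: (A :|: S :\ i) = A.
  apply/finset.setP => k; rewrite !inE; case: (eqVneq k i) => [->|ki] /=.
    by rewrite orbF.
  by case: (k \in A).
rewrite E1 E2 in Hsub; lra.
Qed.

Lemma EE0 h : EE (fun _ => 0) h = h finset.set0.
Proof.
rewrite /EE (bigD1 finset.set0) //= big1 ?addr0.
  rewrite /wS big1 ?mul1r // => k _; by rewrite /gk inE subr0.
move=> S /finset.set0Pn [k kS]; rewrite /wS (bigD1 k) //= /gk kS; by rewrite !mul0r.
Qed.

Lemma submod_U1 h i : submodular h -> submodular (fun A => h (i |: A)).
Proof.
move=> Hs A B; have := Hs (i |: A) (i |: B).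
have -> : (i |: A) :|: (i |: B) = i |: (A :|: B).
  by apply/finset.setP => k; rewrite !inE; case: (k == i); case: (k \in A); case: (k \in B).
have -> : (i |: A) :&: (i |: B) = i |: (A :&: B).
  by apply/finset.setP => k; rewrite !inE; case: (k == i); case: (k \in A); case: (k \in B).
by [].
Qed.

Lemma submod_US h S : submodular h -> submodular (fun A => h (A :|: S)).
Proof.
move=> Hs A B; have := Hs (A :|: S) (B :|: S).
have -> : (A :|: S) :|: (B :|: S) = (A :|: B) :|: S.
  by apply/finset.setP => k; rewrite !inE; case: (k \in S); case: (k \in A); case: (k \in B).
have -> : (A :|: S) :&: (B :|: S) = (A :&: B) :|: S.
  by apply/finset.setP => k; rewrite !inE; case: (k \in S); case: (k \in A); case: (k \in B).
by [].
Qed.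

End Sub.
Section Lam.
Variables (R : realType) (T : finType).
Implicit Types (y u : T -> R) (h : {set T} -> R) (A B S : {set T}).

Lemma lam_ineq (l : R) (s : seq T) : 0 <= l <= 1 ->
  forall h u, submodular h -> (forall k, 0 <= u k <= 1) -> (forall j, j \notin s -> u j = 0) ->
  (1 - l) * h finset.set0 + l * EE u h <= EE (fun k => l * u k) h.
Proof.
move=> Hl; elim: s => [|i s IH] h u Hs Hu Hsupp.
  have -> : u = (fun _ => 0) by apply/funext => j; exact: Hsupp.
  have -> : (fun _ : T => l * 0) = (fun _ => 0) by apply/funext => j; rewrite mulr0.
  rewrite EE0; lra.
set u0 := upd u i 0.
have Hu0 : forall k, 0 <= u0 k <= 1 by move=> k; rewrite /u0 /upd; case: (k == i) => //; lra.
have Hs0 : forall j, j \notin s -> u0 j = 0.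
  move=> j js; rewrite /u0 /upd; case: eqVneq => // ji; apply: Hsupp.
  by rewrite inE negb_or ji.
have IH1 := IH _ _ (submod_U1 i Hs) Hu0 Hs0.
have IH0 := IH _ _ Hs Hu0 Hs0.
set a := EE (fun k => l * u0 k) (fun A => h (i |: A)) in IH1.
set b := EE (fun k => l * u0 k) h in IH0.
set a' := EE u0 (fun A => h (i |: A)) in IH1.
set b' := EE u0 h in IH0.
have Ew1 : upd (fun k => l * u k) i 1 = upd (fun k => l * u0 k) i 1.
  by apply/funext => k; rewrite /upd /u0 /upd; case: (k == i).
have Ew0 : upd (fun k => l * u k) i 0 = (fun k => l * u0 k).
  by apply/funext => k; rewrite /upd /u0 /upd; case: (k == i); rewrite ?mulr0.
have Eu1 : upd u i 1 = upd u0 i 1.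
  by apply/funext => k; rewrite /upd /u0 /upd; case: (k == i).
have Hw : EE (fun k => l * u k) h = l * u i * a + (1 - l * u i) * b.
  by rewrite (EE_lin _ i) Ew1 Ew0 EE_upd1.
have HuE : EE u h = u i * a' + (1 - u i) * b'.
  by rewrite (EE_lin _ i) Eu1 EE_upd1.
have Hkey : a' - b' <= h (i |: finset.set0) - h finset.set0.
  rewrite /a' /b' /u0 -EE_opp -EE_add EE_upd0 -(EE_cst u (h (i |: finset.set0) - h finset.set0)).
  apply: EE_le => // A.
  have := Hs (A :\ i) (i |: finset.set0).
  have -> : (A :\ i) :|: (i |: finset.set0) = i |: (A :\ i).
    by apply/finset.setP => k; rewrite !inE orbF orbC.
  have -> : (A :\ i) :&: (i |: finset.set0) = finset.set0.
    apply/finset.setP => k; rewrite !inE.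
    by rewrite orbF; case: (eqVneq k i); rewrite ?andbF ?andbT.
  lra.
have Hui := Hu i.
have H1 : 0 <= l * u i * (1 - l) * (h (i |: finset.set0) - h finset.set0 - a' + b').
  apply: mulr_ge0; last lra.
  apply: mulr_ge0; last lra.
  apply: mulr_ge0; lra.
have c1 : 0 <= l * u i by apply: mulr_ge0; lra.
have c2 : 0 <= 1 - l * u i.
  have : l * u i <= 1 * 1 by apply: ler_pM; lra.
  lra.
have H2 := ler_wpM2l c1 IH1.
have H3 := ler_wpM2l c2 IH0.
rewrite Hw HuE.
rewrite !mulrDr in H2 H3.
have E : forall X Y : R, X * Y = X * Y by [].
nra.
Qed.

End Lam.

Section Key.
Variables (R : realType) (T : finType).
Implicit Types (y u : T -> R) (h : {set T} -> R) (A B S : {set T}).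

Lemma EE_lb h y c : submodular h -> (forall S, 0 <= h S) -> 0 <= c <= 1 ->
  (forall k, 0 <= y k <= 1 - c) -> c * h finset.set0 <= EE y h.
Proof.
move=> Hs Hh Hc Hy.
case: (eqVneq c 1) => [c1|c1].
  have -> : y = (fun _ => 0) by apply/funext => k; have := Hy k; rewrite c1; lra.
  by rewrite EE0 c1 mul1r.
have lpos : 0 < 1 - c by move: c1 Hc; rewrite -subr_eq0; case: (ltgtP c 1) => //; lra.
set u := fun k => y k / (1 - c).
have Hu : forall k, 0 <= u k <= 1.
  move=> k; rewrite /u; have := Hy k => /andP[y0 y1]; apply/andP; split.
    exact: divr_ge0 (ltW lpos).
  by rewrite ler_pdivrMr // mul1r.
have := @lam_ineq R T (1 - c) (index_enum T) ltac:(lra) h u Hs Hu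
  ltac:(by move=> j; rewrite mem_index_enum).
have -> : (fun k => (1 - c) * u k) = y.
  by apply/funext => k; rewrite /u mulrC -mulrA mulVf ?mulr1 // gt_eqF.
have : 0 <= EE u h by apply: EE_ge0.
have -> : 1 - (1 - c) = c by ring.
move=> H0 H1; have : 0 <= (1 - c) * EE u h by apply: mulr_ge0; lra.
lra.
Qed.

Lemma key_ineq f x z (a : {set T} -> R) c :
  submodular f -> (forall S, 0 <= f S) -> 0 <= c <= 1 -> (forall k, 0 <= x k <= 1 - c) ->
  (forall S, 0 <= a S) -> \sum_S a S = 1 ->
  (forall i, \sum_S a S * (i \in S)%:R = z i) ->
  c * (\sum_S a S * f S) - multilinear_ext f x <= mcg_objective f x z.
Proof.
move=> Hs Hf Hc Hx Ha Ha1 Hz.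
have Hx01 : forall k, 0 <= x k <= 1 by move=> k; have := Hx k; lra.
have G : forall i, (1 - x i) * gradF f x i = EE x (fun A => f (i |: A) - f A).
  move=> i; rewrite gradF_Dg /Dg EE_add EE_opp -EE_upd1 (EE_lin x i f); ring.
rewrite /mcg_objective mleE.
have -> : \sum_i z i * (1 - x i) * gradF f x i =
          \sum_S a S * EE x (fun A => \sum_i (i \in S)%:R * (f (i |: A) - f A)).
  under eq_bigr do rewrite -mulrA G -Hz mulr_suml.
  rewrite exchange_big /=; apply: eq_bigr => S _.
  rewrite EE_sum mulr_sumr; apply: eq_bigr => i _.
  by rewrite EE_scale mulrA.
have -> : c * (\sum_S a S * f S) - EE x f = \sum_S a S * (c * f S - EE x f).
  under [RHS]eq_bigr do rewrite mulrBr.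
  rewrite sumrB -mulr_suml Ha1 mul1r mulr_sumr; congr (_ - _).
  by apply: eq_bigr => S _; rewrite mulrCA.
apply: ler_sum => S _; apply: ler_wpM2l => //.
apply: (@le_trans _ _ (EE x (fun A => f (A :|: S) - f A))).
  rewrite EE_add EE_opp lerD2r.
  have := EE_lb (submod_US S Hs) (fun A => Hf _) Hc Hx.
  by rewrite finset.set0U.
apply: EE_le => // A.
have -> : \sum_i (i \in S)%:R * (f (i |: A) - f A) = \sum_(i in S) (f (i |: A) - f A).
  rewrite [RHS]big_mkcond; apply: eq_bigr => i _.
  by case: (i \in S); rewrite ?mul1r ?mul0r.
exact: sub_sum.
Qed.

End Key.
Section WC.
Variable R : realType.
Implicit Types (A : set R) (f g : R -> R).

Lemma wcM A f g : {within A, continuous f} -> {within A, continuous g} ->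
  {within A, continuous (fun s => f s * g s)}.
Proof. by move=> cf cg x; apply: cvgM; [exact: cf|exact: cg]. Qed.

Lemma wcD A f g : {within A, continuous f} -> {within A, continuous g} ->
  {within A, continuous (fun s => f s + g s)}.
Proof. by move=> cf cg x; apply: cvgD; [exact: cf|exact: cg]. Qed.

Lemma wcB A f g : {within A, continuous f} -> {within A, continuous g} ->
  {within A, continuous (fun s => f s - g s)}.
Proof. by move=> cf cg x; apply: cvgB; [exact: cf|exact: cg]. Qed.

Lemma wc_cont A f : continuous f -> {within A, continuous f}.
Proof. exact: continuous_subspaceT. Qed.

Lemma wc_cst A (c : R) : {within A, continuous (fun _ : R => c)}.
Proof. by apply: wc_cont => x; exact: cvg_cst. Qed.

Lemma wc_id A : {within A, continuous (fun s : R => s)}.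
Proof. by apply: wc_cont => x; exact: cvg_id. Qed.

Lemma wc_expM A (c : R) : {within A, continuous (fun s => expR (c * s))}.
Proof.
apply: wc_cont => x; apply: (@continuous_comp _ _ _ (fun s => c * s) expR).
  by apply: cvgM; [exact: cvg_cst | exact: cvg_id].
exact: continuous_expR.
Qed.

Lemma wc_sum A (I : eqType) (r : seq I) (G : I -> R -> R) :
  (forall i, {within A, continuous (G i)}) ->
  {within A, continuous (fun s => \sum_(i <- r) G i s)}.
Proof.
move=> H; elim: r => [|a r IH].
  have -> : (fun s => \sum_(i <- [::]) G i s) = (fun _ => 0) by apply/funext => s; rewrite big_nil.
  exact: wc_cst.
have -> : (fun s => \sum_(i <- a :: r) G i s) = (fun s => G a s + \sum_(i <- r) G i s).
  by apply/funext => s; rewrite big_cons.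
exact: wcD.
Qed.

Lemma wc_prod A (I : eqType) (r : seq I) (G : I -> R -> R) :
  (forall i, {within A, continuous (G i)}) ->
  {within A, continuous (fun s => \prod_(i <- r) G i s)}.
Proof.
move=> H; elim: r => [|a r IH].
  have -> : (fun s => \prod_(i <- [::]) G i s) = (fun _ => 1) by apply/funext => s; rewrite big_nil.
  exact: wc_cst.
have -> : (fun s => \prod_(i <- a :: r) G i s) = (fun s => G a s * \prod_(i <- r) G i s).
  by apply/funext => s; rewrite big_cons.
exact: wcM.
Qed.

Lemma wc_EE (T : finType) A (z : R -> T -> R) (h : {set T} -> R) :
  (forall k, {within A, continuous (fun s => z s k)}) ->
  {within A, continuous (fun s => EE (z s) h)}.
Proof.
move=> H; apply: (@wc_sum A _ _ (fun S s => wS (z s) S * h S)) => S.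
apply: wcM; last exact: wc_cst.
apply: (@wc_prod A _ _ (fun k s => gk (z s) S k)) => k.
rewrite /gk; case: (k \in S); first exact: H.
by apply: wcB; [exact: wc_cst | exact: H].
Qed.

Lemma ndecr_der (g dg : R -> R) (a b : R) :
  (forall t, a < t < b -> is_derive t 1 g (dg t)) ->
  (forall t, a < t < b -> 0 <= dg t) ->
  {within `[a, b], continuous g} ->
  forall s t, a <= s -> s <= t -> t <= b -> g s <= g t.
Proof.
move=> Hd Hp Hc; apply: ger0_derive1_ndecr => //.
  by move=> t; rewrite in_itv /= => Ht; case: (Hd t Ht).
move=> t; rewrite in_itv /= => Ht; rewrite derive1E.
by case: (Hd t Ht) => _ ->; exact: Hp.
Qed.

Lemma sup_bound (E : set R) (Fv b : R) : 0 <= Fv -> (forall y, E y -> 0 <= y) ->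
  (forall y, E y -> b * y <= Fv) -> b * sup E <= Fv.
Proof.
move=> F0 E0 HE.
case: (pselect (has_sup E)) => [hs|nhs]; last by rewrite sup_out // mulr0.
have [y0 Ey0] := hs.1.
have s0 : 0 <= sup E by apply: le_trans (E0 _ Ey0) (sup_upper_bound hs Ey0).
case: (lerP b 0) => bpos.
  have : b * sup E <= 0 by rewrite mulr_le0_ge0.
  lra.
have : sup E <= Fv / b.
  apply: ge_sup; first by exists y0.
  by move=> y Ey; rewrite ler_pdivlMr // mulrC; exact: HE.
by rewrite ler_pdivlMr // mulrC.
Qed.

End WC.
Section Main.
Variables (R : realType) (T : finType) (p : R) (f : {set T} -> R) (P : set (T -> R))
  (x v : R -> T -> R).
Hypothesis Hp : 0 <= p < 1.
Hypothesis Hcube : in_unit_cube P.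
Hypothesis Hdown : downward_closed P.
Hypothesis Hpb : forall z i, P z -> z i <= p.
Hypothesis Hx0 : x 0 = (fun _ => 0).
Hypothesis Hcont : forall i, {within `[0, 1], continuous (fun s => x s i)}.
Hypothesis Hv : forall t : R, 0 < t < 1 -> P (v t) /\
  forall w, P w -> mcg_objective f (x t) w <= mcg_objective f (x t) (v t).
Hypothesis Hder : forall t : R, 0 < t < 1 -> forall i,
  is_derive t 1 (fun s : R => x s i) (v t i * (1 - x t i)).

Lemma v0p t i : 0 < t < 1 -> 0 <= v t i <= p.
Proof.
move=> Ht; have [Pv _] := Hv Ht.
have /andP[h0 _] := Hcube Pv i.
by rewrite h0 /= Hpb.
Qed.

Lemma nincr_der (g dg : R -> R) :
  (forall t : R, 0 < t < 1 -> is_derive t 1 g (dg t)) ->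
  (forall t : R, 0 < t < 1 -> dg t <= 0) ->
  {within `[0, 1], continuous g} ->
  forall s t : R, 0 <= s -> s <= t -> t <= 1 -> g t <= g s.
Proof.
move=> Hd Hn Hc s t s0 st t1.
have := @ndecr_der R (fun u => - g u) (fun u => - dg u) 0 1.
move=> /(_ _ _ _ s t s0 st t1); rewrite lerN2; apply.
- move=> u Hu; exact: is_deriveN (Hd u Hu).
- by move=> u Hu; rewrite oppr_ge0; exact: Hn.
- by move=> u; apply: cvgN; exact: Hc.
Qed.

Lemma is_deriveMf (g h : R -> R) (t dg dh : R) : is_derive t 1 g dg -> is_derive t 1 h dh ->
  is_derive t 1 (fun s => g s * h s) (g t * dh + h t * dg).
Proof. move=> A B; exact: (is_deriveM A B). Qed.

Section Coordi.
Variable i : T.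
Let y := fun s => 1 - x s i.

Let yc : {within `[0, 1], continuous y}.
Proof. by apply: wcB; [exact: wc_cst | exact: Hcont]. Qed.

Let yd (t : R) : 0 < t < 1 -> is_derive t 1 y (- (v t i * y t)).
Proof. move=> Ht; exact: is_derive_onem (Hder Ht i). Qed.

Let ysq (t : R) : 0 <= t <= 1 -> y t * y t <= 1.
Proof.
move=> /andP[t0 t1].
have y0 : y 0 = 1 by rewrite /y Hx0 subr0.
suff H1 : y t * y t <= y 0 * y 0 by rewrite y0 mulr1 in H1.
apply: (@nincr_der (fun s => y s * y s) (fun s => - (2 * v s i * (y s * y s))) _ _ _ 0 t (lexx 0) t0 t1).
- move=> u Hu; apply: is_derive_eq; first exact: (is_deriveM (yd Hu) (yd Hu)).
  by rewrite /GRing.scale /=; ring.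
- move=> u Hu; have := v0p i Hu; rewrite oppr_le0 => /andP[v0 _].
  by apply: mulr_ge0; [apply: mulr_ge0 | rewrite -expr2 sqr_ge0].
- by apply: wcM.
Qed.


Let qsq (t : R) : 0 <= t <= 1 -> 1 <= (y t * expR t) * (y t * expR t).
Proof.
move=> /andP[t0 t1].
have y0 : y 0 = 1 by rewrite /y Hx0 subr0.
suff H1 : (y 0 * expR 0) * (y 0 * expR 0) <= (y t * expR t) * (y t * expR t).
  by rewrite y0 expR0 !mulr1 in H1.
apply: (@ndecr_der R (fun s => (y s * expR s) * (y s * expR s))
  (fun s => 2 * (1 - v s i) * ((y s * expR s) * (y s * expR s))) 0 1 _ _ _ 0 t (lexx 0) t0 t1).
- move=> u Hu; have Q := is_deriveMf (yd Hu) (is_derive_expR u).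
  apply: (is_derive_eq (is_deriveMf Q Q)).
  ring.
- move=> u Hu; have := v0p i Hu => /andP[_ vp].
  apply: mulr_ge0; last by rewrite -expr2 sqr_ge0.
  case/andP: Hp => ? ?; apply: mulr_ge0 => //; lra.
- have ce : {within `[0, 1], continuous (@expR R)} by apply: wc_cont; exact: continuous_expR.
  by apply: wcM; apply: wcM.
Qed.

Lemma ypos (t : R) : 0 <= t <= 1 -> 0 < 1 - x t i.
Proof.
move=> /andP[t0 t1]; rewrite -/(y t).
have nz : forall c, 0 <= c <= 1 -> y c != 0.
  move=> c Hc; apply/eqP => yc0; have := qsq Hc; rewrite yc0 !mul0r; lra.
case: (ltrP 0 (y t)) => // yt.
have ytn : y t < 0 by rewrite lt_neqAle yt nz // t0 t1.
have y0 : y 0 = 1 by rewrite /y Hx0 subr0.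
have ct : {within `[0, t], continuous y}.
  apply: (continuous_subspaceW _ yc) => u /=; rewrite !in_itv /= => /andP[-> ut] /=.
  exact: le_trans ut t1.
have [c cI yc0] : exists2 c, c \in `[0, t] & y c = 0.
  apply: (@IVT R y 0 t 0 t0 ct).
  rewrite y0; apply/andP; split.
    by rewrite ge_min (ltW ytn) orbT.
  by rewrite le_max ler01.
move: cI; rewrite in_itv /= => /andP[c0 ct'].
have := nz c; rewrite c0 (le_trans ct' t1) => /(_ isT); by rewrite yc0 eqxx.
Qed.

Lemma yle1 (t : R) : 0 <= t <= 1 -> 1 - x t i <= 1.
Proof.
move=> Ht; have := ysq Ht; have := ypos Ht; rewrite /y; nra.
Qed.

Lemma yexp (t : R) : 0 <= t <= 1 -> expR (- t) <= 1 - x t i.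
Proof.
move=> Ht; have := qsq Ht; have := ypos Ht; rewrite -/(y t) => yp H.
have q1 : 1 <= y t * expR t.
  have : 0 < y t * expR t by apply: mulr_gt0 => //; exact: expR_gt0.
  nra.
have := ler_wpM2r (expR_ge0 (- t)) q1.
by rewrite mul1r -mulrA expRxMexpNx_1 mulr1.
Qed.

Lemma ylin (t : R) : 0 <= t <= 1 -> 1 - p * t <= 1 - x t i.
Proof.
move=> /andP[t0 t1]; rewrite -/(y t).
have y0 : y 0 = 1 by rewrite /y Hx0 subr0.
suff H1 : y 0 + p * 0 <= y t + p * t by rewrite y0 mulr0 addr0 in H1; lra.
apply: (@ndecr_der R (fun s => y s + p * s) (fun s => - (v s i * y s) + p) 0 1
   _ _ _ 0 t (lexx 0) t0 t1).
- move=> u Hu; apply: is_derive_eq.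
    exact: (is_deriveD (yd Hu) (is_deriveM (is_derive_cst p u 1) (is_derive_id u 1))).
  by rewrite /GRing.scale /=; ring.
- move=> u Hu; have := v0p i Hu => /andP[v0 vp].
  have Hu' : 0 <= u <= 1 by move: Hu => /andP[? ?]; apply/andP; split; apply: ltW.
  have := ypos Hu'; have := yle1 Hu'; rewrite -/(y u) => y1 yp.
  have : v u i * y u <= v u i * 1 by apply: ler_wpM2l.
  lra.
- by apply: wcD => //; apply: wcM; [exact: wc_cst | exact: wc_id].
Qed.

End Coordi.

Lemma x01 (t : R) k : 0 <= t <= 1 -> 0 <= x t k <= 1.
Proof. move=> Ht; have := ypos k Ht; have := yle1 k Ht; lra. Qed.

Lemma inPw (t : R) : 0 < t < 1 -> P (fun k => v t k * (1 - x t k)).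
Proof.
move=> Ht; have [Pv _] := Hv Ht.
have Ht' : 0 <= t <= 1 by move: Ht => /andP[? ?]; apply/andP; split; apply: ltW.
apply: (Hdown _ Pv) => k; have := v0p k Ht => /andP[v0 _].
have := ypos k Ht'; have := yle1 k Ht' => y1 yp.
apply/andP; split; first by apply: mulr_ge0 => //; lra.
by rewrite ler_piMr.
Qed.

Lemma memb (b : R) : polytope P -> 0 <= b <= 1 -> scale_set b P (x b).
Proof.
move=> [cs Pcs] /andP[b0 b1].
have key : forall c, c \in cs -> \sum_i c.1 i * x b i <= b * c.2.
  move=> c cin.
  suff H : \sum_i c.1 i * x b i - b * c.2 <= \sum_i c.1 i * x 0 i - 0 * c.2.
    have E0 : \sum_i c.1 i * x 0 i - 0 * c.2 = 0.
      by rewrite Hx0 big1 ?mul0r ?subr0 // => k _; rewrite mulr0.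
    by move: H; rewrite E0 subr_le0.
  apply: (@nincr_der (fun s => \sum_i c.1 i * x s i - s * c.2)
     (fun t => \sum_i c.1 i * (v t i * (1 - x t i)) - c.2) _ _ _ 0 b (lexx 0) b0 b1).
  - move=> t Ht.
    have A : is_derive t 1 (fun s => \sum_i c.1 i * x s i) (\sum_i c.1 i * (v t i * (1 - x t i))).
      apply: (@is_derive_sumseq R _ (index_enum T) (fun i s => c.1 i * x s i)) => k.
      apply: (is_derive_eq (is_deriveMf (is_derive_cst (c.1 k) t 1) (Hder Ht k))).
      by rewrite mulr0 addr0 mulrC.
    have B := is_deriveMf (is_derive_id t 1) (is_derive_cst c.2 t 1).
    apply: (is_derive_eq (is_deriveB A B)).
    by rewrite /= mulr0 add0r mulr1.
  - move=> t Ht; rewrite subr_le0.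
    have := inPw Ht; rewrite Pcs => /(_ c cin) /=.
    by under eq_bigr do rewrite mulrC.
  - apply: wcB.
      apply: (@wc_sum R _ _ _ (fun i s => c.1 i * x s i)) => k.
      by apply: wcM; [exact: wc_cst | exact: Hcont].
    by apply: wcM; [exact: wc_id | exact: wc_cst].
case: (eqVneq b 0) => [->|bn0].
  have H12 : 0 < (2^-1 : R) < 1 by apply/andP; split; lra.
  have [Pv _] := Hv H12.
  exists (v 2^-1) => //; rewrite Hx0; apply/funext => k; by rewrite mul0r.
have bpos : 0 < b by rewrite lt_neqAle eq_sym bn0.
exists (fun i => x b i / b).
  rewrite Pcs => c cin /=.
  have := key c cin; rewrite -ler_pdivrMl // => H.
  apply: le_trans H; rewrite mulr_sumr le_eqVlt; apply/orP; left; apply/eqP; rewrite /=.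
  by apply: eq_bigr => k _; rewrite [RHS]mulrC mulrA.
by apply/funext => k; rewrite mulrCA mulfV // mulr1.
Qed.


Section Value.
Hypothesis Hf0 : forall S, 0 <= f S.
Hypothesis Hfe : f finset.set0 = 0.
Hypothesis Hs : submodular f.
Variables (zstar : T -> R) (a : {set T} -> R).
Hypothesis Pz : P zstar.
Hypothesis Ha : forall S, 0 <= a S.
Hypothesis Ha1 : \sum_S a S = 1.
Hypothesis Hmarg : forall i, \sum_S a S * (i \in S)%:R = zstar i.
Let y0 := \sum_S a S * f S.
Let Fv := fun s => EE (x s) f.

Let y0_ge0 : 0 <= y0.
Proof. by apply: sumr_ge0 => S _; apply: mulr_ge0. Qed.

Let Fder (t : R) : 0 < t < 1 -> is_derive t 1 Fv (mcg_objective f (x t) (v t)).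
Proof.
move=> Ht; apply: is_derive_eq.
  apply: (@is_derive_EE R T x (fun k => v t k * (1 - x t k)) t f) => k; exact: Hder.
by rewrite /mcg_objective; apply: eq_bigr => k _; rewrite gradF_Dg.
Qed.

Let Fc : {within `[0, 1], continuous Fv}.
Proof. exact: wc_EE. Qed.

Let F0 : Fv 0 = 0.
Proof. by rewrite /Fv Hx0 EE0. Qed.

Let itv_cc (t : R) : 0 < t < 1 -> 0 <= t <= 1.
Proof. by move=> /andP[? ?]; apply/andP; split; apply: ltW. Qed.

Let low1 (t : R) : 0 < t < 1 -> expR (- t) * y0 - Fv t <= mcg_objective f (x t) (v t).
Proof.
move=> Ht; have Ht' := itv_cc Ht.
apply: le_trans (proj2 (Hv Ht) _ Pz).
rewrite /Fv -mleE; apply: key_ineq => //.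
  by rewrite expR_ge0 /= expR_le1 oppr_le0; case/andP: Ht' .
move=> k; have := yexp k Ht'; have := x01 k Ht'; lra.
Qed.

Let low2 (t : R) : 0 < t < 1 -> (1 - p) * y0 - Fv t <= mcg_objective f (x t) (v t).
Proof.
move=> Ht; have Ht' := itv_cc Ht.
apply: le_trans (proj2 (Hv Ht) _ Pz).
rewrite /Fv -mleE; apply: key_ineq => //.
  by case/andP: Hp => ? ?; apply/andP; split; lra.
move=> k; have := ylin k Ht'; have := x01 k Ht'.
case/andP: Hp => p0 p1; case/andP: Ht' => t0 t1.
have : p * t <= p * 1 by apply: ler_wpM2l.
lra.
Qed.

Lemma h1mono (s t : R) : 0 <= s -> s <= t -> t <= 1 ->
  expR s * Fv s - s * y0 <= expR t * Fv t - t * y0.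
Proof.
move=> s0 st t1.
apply: (@ndecr_der R (fun s => expR s * Fv s - s * y0)
  (fun t => (expR t * mcg_objective f (x t) (v t) + Fv t * expR t) - (t * 0 + y0 * 1))
  0 1 _ _ _ s t s0 st t1).
- move=> u Hu.
  exact: (is_deriveB (is_deriveMf (is_derive_expR u) (Fder Hu))
                     (is_deriveMf (is_derive_id u 1) (is_derive_cst y0 u 1))).
- move=> u Hu; have := low1 Hu.
  have e1 : expR u * expR (- u) = 1 by exact: expRxMexpNx_1.
  have ep := expR_gt0 u.
  move=> H; have := ler_wpM2l (ltW ep) H.
  rewrite mulrBr mulrA e1 mul1r; lra.
- apply: wcB; first by apply: wcM; [apply: wc_cont; exact: continuous_expR | exact: Fc].
  by apply: (@wcM _ _ (fun s => s) (fun _ => y0)); [exact: wc_id | exact: wc_cst].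
Qed.

Lemma h2mono (s t : R) : 0 <= s -> s <= t -> t <= 1 ->
  expR s * Fv s - (1 - p) * expR s * y0 <= expR t * Fv t - (1 - p) * expR t * y0.
Proof.
move=> s0 st t1.
apply: (@ndecr_der R (fun s => expR s * Fv s - (1 - p) * expR s * y0)
  (fun t => (expR t * mcg_objective f (x t) (v t) + Fv t * expR t)
     - ((1 - p) * expR t * 0 + y0 * ((1 - p) * expR t + expR t * 0)))
  0 1 _ _ _ s t s0 st t1).
- move=> u Hu.
  exact: (is_deriveB (is_deriveMf (is_derive_expR u) (Fder Hu))
     (is_deriveMf (is_deriveMf (is_derive_cst (1 - p) u 1) (is_derive_expR u))
                  (is_derive_cst y0 u 1))).
- move=> u Hu; have := low2 Hu.
  have ep := expR_gt0 u.
  move=> H; have := ler_wpM2l (ltW ep) H.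
  rewrite mulrBr; nra.
- apply: wcB; first by apply: wcM; [apply: wc_cont; exact: continuous_expR | exact: Fc].
  apply: (@wcM _ _ (fun s => (1 - p) * expR s) (fun _ => y0)); last exact: wc_cst.
  by apply: wcM; [exact: wc_cst | apply: wc_cont; exact: continuous_expR].
Qed.

Lemma bound1 (b : R) : 0 <= b <= 1 -> b * expR (- b) * y0 <= Fv b.
Proof.
move=> /andP[b0 b1]; have := h1mono (lexx 0) b0 b1.
rewrite F0 expR0 mulr0 mul0r subr0 subr_ge0 => H.
have := ler_wpM2l (expR_ge0 (- b)) H.
have E1 : expR (- b) * (expR b * Fv b) = Fv b by rewrite mulrA (mulrC (expR (- b))) expRxMexpNx_1 mul1r.
have E2 : expR (- b) * (b * y0) = b * expR (- b) * y0 by rewrite mulrA (mulrC (expR (- b))).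
by rewrite E1 E2.
Qed.

Lemma bound2 (b : R) : 0 <= b <= 1 -> ln ((1 - p)^-1) <= b ->
  (1 - p - expR (- b) * (1 + ln (1 - p))) * y0 <= Fv b.
Proof.
move=> /andP[b0 b1] Lb.
case/andP: Hp => p0 p1.
have pp : 0 < 1 - p by lra.
set L := ln ((1 - p)^-1).
have L0 : 0 <= L by apply: ln_ge0; rewrite invf_ge1 //; lra.
have eL : expR L = (1 - p)^-1 by rewrite /L lnK // posrE invr_gt0.
have lnE : ln (1 - p) = - L by rewrite /L lnV ?opprK // posrE.
have H1 := h1mono (lexx 0) L0 (le_trans Lb b1).
rewrite F0 expR0 mulr0 mul0r subr0 subr_ge0 in H1.
have H2 := h2mono L0 Lb b1.
have E : (1 - p) * expR L * y0 = y0 by rewrite eL mulfV ?gt_eqF // mul1r.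
rewrite E in H2.
have K : expR b * ((1 - p - expR (- b) * (1 + ln (1 - p))) * y0) =
         (1 - p) * expR b * y0 - (1 - L) * y0.
  rewrite lnE expRN; field; exact: lt0r_neq0 (expR_gt0 b).
have H3 : expR b * ((1 - p - expR (- b) * (1 + ln (1 - p))) * y0) <= expR b * Fv b.
  rewrite K; lra.
by rewrite ler_pM2l ?expR_gt0 in H3.
Qed.

End Value.

End Main.

Theorem theorem3 (R : realType) (T : finType) (p : R)
    (f : {set T} -> R) (P : set (T -> R)) (x v : R -> T -> R) :
  0 <= p < 1 ->
  nonneg_setfun f -> submodular f ->
  polytope P -> in_unit_cube P -> downward_closed P ->
  (forall z i, P z -> z i <= p) ->
  MCG_trajectory f P x v ->
  forall b : R, 0 <= b <= 1 ->
    scale_set b P (x b) /\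
    (forall zstar : T -> R, P zstar ->
      (forall z, P z -> concave_closure f z <= concave_closure f zstar) ->
      (b <= ln ((1 - p)^-1) ->
         multilinear_ext f (x b) >= b * expR (- b) * concave_closure f zstar) /\
      (ln ((1 - p)^-1) <= b ->
         multilinear_ext f (x b) >=
           (1 - p - expR (- b) * (1 + ln (1 - p))) * concave_closure f zstar)).
Proof.
move=> Hp [Hf0 Hfe] Hs Hpoly Hcube Hdown Hpb [Hx0 Hcont Hv Hder] b Hb.
split; first exact: (memb Hp Hcube Hdown Hpb Hx0 Hcont Hv Hder Hpoly Hb).
move=> zstar Pz _.
have Fb0 : 0 <= multilinear_ext f (x b).
  rewrite mleE; apply: EE_ge0 => // k.
  exact: (x01 Hp Hcube Hpb Hx0 Hcont Hv Hder k Hb).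
have E0 : forall y, [set y : R | exists a : {set T} -> R,
         [/\ forall S, 0 <= a S,
             \sum_(S : {set T}) a S = 1,
             (forall i, \sum_(S : {set T}) a S * (i \in S)%:R = zstar i) &
             y = \sum_(S : {set T}) a S * f S]] y -> 0 <= y.
  move=> y [a [Ha _ _ ->]]; apply: sumr_ge0 => S _; exact: mulr_ge0.
split => HL; rewrite /concave_closure; apply: sup_bound => //.
- move=> y [a [Ha Ha1 Hm ->]]; rewrite mleE.
  exact: (bound1 Hp Hcube Hpb Hx0 Hcont Hv Hder Hf0 Hfe Hs Pz Ha Ha1 Hm Hb).
- move=> y [a [Ha Ha1 Hm ->]]; rewrite mleE.
  exact: (bound2 Hp Hcube Hpb Hx0 Hcont Hv Hder Hf0 Hfe Hs Pz Ha Ha1 Hm Hb HL).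
Qed.
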